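(* Let $G$ be a directed multigraph on vertex set $\{0,1,\dots,n+1\}$ with $m$ edges, each edge $(i,j)$ oriented $i\to j$ with $i<j$, having unique source $0$ and unique sink $n+1$, and such that $\operatorname{outdeg}_G(i)=1$ for every $i\in[n]$. Let $d_i=\operatorname{indeg}_G(i)-1$ for $i\in[n]$. Then $$\operatorname{vol}\mathcal F_G(1,0,\dots,0,-1)=K_G\Big(0,d_1,\dots,d_n,-\sum_{i=1}^n d_i\Big)=1.$$
   Context: For a directed multigraph $G$ on $\{0,\dots,n+1\}$ and a vector $\mathbf a=(a_0,\dots,a_{n+1})$ with $\sum_i a_i=0$, the flow polytope $\mathcal F_G(\mathbf a)$ is the set of $f\in\mathbb R_{\ge0}^{E(G)}$ such that at each vertex $v$ the net flow (outgoing minus incoming) equals $a_v$. $K_G(\mathbf a)$ is the number of integer points of $\mathcal F_G(\mathbf a)$. $\operatorname{vol}$ denotes normalized volume: for a $d$-dimensional polytope, $d!$ times its volume with respect to the lattice of integer points in its affine span. *)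

(* Defs.v *)
From HB Require Import structures.
From mathcomp Require Import all_boot all_order all_algebra.
From mathcomp Require Import finmap.
From mathcomp Require Import boolp classical_sets cardinality filter reals topology normedtype.
Set Implicit Arguments. Unset Strict Implicit. Unset Printing Implicit Defensive.
Import Order.TTheory GRing.Theory Num.Theory.
Import numFieldNormedType.Exports.
Local Open Scope classical_set_scope.
Local Open Scope ring_scope.

(* ---------------- Directed multigraphs ----------------
   A directed multigraph on the vertex set {0,...,n+1} = 'I_(n.+2) with m
   edges is given by two maps src tgt : 'I_m -> 'I_(n.+2); edge e goes
   from (src e) to (tgt e).  Parallel edges are allowed. *)

Definition indeg (n m : nat) (tgt : 'I_m -> 'I_(n.+2)) (v : 'I_(n.+2)) : nat :=
  #|[set e : 'I_m | tgt e == v]|.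

Definition outdeg (n m : nat) (src : 'I_m -> 'I_(n.+2)) (v : 'I_(n.+2)) : nat :=
  #|[set e : 'I_m | src e == v]|.

Section Flow.
Variable R : realType.

Definition intvec (m : nat) (x : 'rV[R]_m) : Prop :=
  forall e : 'I_m, x 0 e \is a Num.int.

Definition flow_polytope (n m : nat) (src tgt : 'I_m -> 'I_(n.+2))
  (a : 'I_(n.+2) -> R) : set 'rV[R]_m :=
  [set f | (forall e, 0 <= f 0 e) /\
           forall v : 'I_(n.+2),
             \sum_(e | src e == v) f 0 e - \sum_(e | tgt e == v) f 0 e = a v].

(* K_G(a) : number of integer points of F_G(a) (F_G(a) is bounded, hence
   this set is finite and fset_set enumerates it) *)
Definition K_G (n m : nat) (src tgt : 'I_m -> 'I_(n.+2)) (a : 'I_(n.+2) -> R)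
  : nat :=
  #|` fset_set [set f | flow_polytope src tgt a f /\ intvec f] |.

Definition affine_hull (m : nat) (S : set 'rV[R]_m) : set 'rV[R]_m :=
  [set x | exists (k : nat) (p : 'I_k -> 'rV[R]_m) (c : 'I_k -> R),
      (forall i, S (p i)) /\ \sum_i c i = 1 /\ x = \sum_i c i *: p i].

Definition dirspace (m : nat) (S : set 'rV[R]_m) : set 'rV[R]_m :=
  [set v | exists x y, affine_hull S x /\ affine_hull S y /\ v = x - y].

Definition affdim (m : nat) (S : set 'rV[R]_m) : nat :=
  \max_(k < m.+1 | `[< exists A : 'M[R]_(k, m),
                       row_free A /\ forall i, dirspace S (row i A) >]) k.

(* Volume of S relative to the lattice L = aff(S) ∩ Z^m of integer points in
   its affine span, defined as the Jordan content (Riemann-sum limit) with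
   respect to that lattice: fix an origin p0 ∈ aff(S) ∩ Z^m; with
   L0 = dirspace(S) ∩ Z^m (so that L = p0 + L0 and a fundamental cell of L0
   has volume 1), the volume is
      lim_{N -> oo}  #{ v ∈ L0 | p0 + v / N ∈ S } / N^d ,   d = dim S.  *)
Definition lattice_origin (m : nat) (S : set 'rV[R]_m) : 'rV[R]_m :=
  xget 0 [set p | affine_hull S p /\ intvec p].

Definition grid_count (m : nat) (S : set 'rV[R]_m) (N : nat) : nat :=
  #|` fset_set [set v | intvec v /\ dirspace S v /\
                        S (lattice_origin S + (N%:R)^-1 *: v)] |.

Definition relvol (m : nat) (S : set 'rV[R]_m) : R :=
  limn (fun N : nat => ((grid_count S N)%:R / (N%:R) ^+ affdim S : R)).

Definition normvol (m : nat) (S : set 'rV[R]_m) : R :=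
  (affdim S)`!%:R * relvol S.

End Flow.

(* Main.v *)
Require Import Defs.
From HB Require Import structures.
From mathcomp Require Import all_boot all_order all_algebra.
From mathcomp Require Import finmap.
From mathcomp Require Import boolp classical_sets cardinality filter reals topology normedtype sequences.
From mathcomp Require Import ring lra zify.
Import Order.TTheory GRing.Theory Num.Theory.
Import numFieldNormedType.Exports.
Local Open Scope ring_scope.
Set Implicit Arguments. Unset Strict Implicit. Unset Printing Implicit Defensive.

Section Lim.
Local Open Scope classical_set_scope.
Lemma lim_binom (R : realType) (d : nat) :
  (fun N : nat => (('C(d + N, d))%:R / (N%:R) ^+ d : R)) @ \oo --> (((d`!)%:R)^-1 : R).
Proof.
elim: d => [|d IH].
  have -> : (fun N : nat => (('C(0 + N, 0))%:R / (N%:R) ^+ 0 : R)) = fun _ => 1.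
    by apply/funext => N; rewrite bin0 expr0 divr1.
  by rewrite fact0 invr1; apply: cvg_cst.
rewrite -cvg_shiftS; rewrite -cvg_shiftS in IH.
set h := fun N : nat => ((d.+1)%:R)^-1 * (1 + (d.+1)%:R * (harmonic N : R)).
have E : (fun N : nat => (('C(d.+1 + N.+1, d.+1))%:R / (N.+1%:R) ^+ d.+1 : R)) =
   (fun N => h N * (('C(d + N.+1, d))%:R / (N.+1%:R) ^+ d)).
  apply/funext => N; rewrite /h /harmonic /=.
  have hb : (d.+1 * 'C(d.+1 + N.+1, d.+1) = (d.+1 + N.+1) * 'C(d + N.+1, d))%N.
    by rewrite -mul_bin_diag.
  have hb' : ('C(d.+1 + N.+1, d.+1))%:R = ((d.+1 + N.+1)%:R * ('C(d + N.+1, d))%:R) / (d.+1)%:R :> R.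
    by rewrite -natrM -hb natrM mulrAC divff ?mul1r // pnatr_eq0.
  rewrite hb' natrD.
  have h1 : (d.+1)%:R != 0 :> R by rewrite pnatr_eq0.
  have h2 : (N.+1)%:R != 0 :> R by rewrite pnatr_eq0.
  rewrite exprS; field.
  have p1 : (0:R) < 1 + N%:R by have := ler0n R N; lra.
  have p2 : (0:R) < 1 + d%:R by have := ler0n R d; lra.
  by rewrite expf_neq0 // (lt0r_neq0 p1) (lt0r_neq0 p2).
have E' : [sequence (('C(d.+1 + N.+1, d.+1))%:R / (N.+1%:R) ^+ d.+1 : R)]_N =
  (fun N => h N * (('C(d + N.+1, d))%:R / (N.+1%:R) ^+ d)) := E.
rewrite E'.
have -> : ((d.+1)`!%:R)^-1 = ((d.+1)%:R)^-1 * ((d`!)%:R)^-1 :> R.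
  by rewrite factS natrM invfM.
apply: cvgM; last exact: IH.
rewrite -[X in _ --> X]mulr1; apply: cvgM; first exact: cvg_cst.
rewrite -[X in _ --> X]addr0; apply: cvgD; first exact: cvg_cst.
rewrite -[X in _ --> X](mulr0 (d.+1)%:R); apply: cvgM; first exact: cvg_cst.
exact: cvg_harmonic.
Qed.
End Lim.

Section G.
Variable R : realType.
Variables n m : nat.
Variables src tgt : 'I_m -> 'I_(n.+2).
Hypothesis Hord : forall e : 'I_m, (src e < tgt e)%N.
Hypothesis Hsource : forall v : 'I_(n.+2), indeg tgt v = 0%N <-> v = ord0.
Hypothesis Hsink : forall v : 'I_(n.+2), outdeg src v = 0%N <-> v = ord_max.
Hypothesis Hout : forall i : 'I_(n.+2), (0 < i < n.+1)%N -> outdeg src i = 1%N.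

Definition internal (w : 'I_(n.+2)) := (0 < w < n.+1)%N.

Definition netf (v : 'rV[R]_m) (w : 'I_(n.+2)) : R :=
  \sum_(e | src e == w) v 0 e - \sum_(e | tgt e == w) v 0 e.

Definition Nmat : 'M[R]_(m, n.+2) :=
  \matrix_(e, w) ((src e == w)%:R - (tgt e == w)%:R).

Lemma netfE v w : netf v w = (v *m Nmat) 0 w.
Proof.
rewrite /netf !mxE (big_mkcond (fun e => src e == w)) (big_mkcond (fun e => tgt e == w)).
rewrite -sumrB; apply: eq_bigr => e _; rewrite mxE mulrBr.
by case: (src e == w); case: (tgt e == w); rewrite /= ?mulr1 ?mulr0.
Qed.

Lemma netfD a u v w : netf (a *: u + v) w = a * netf u w + netf v w.
Proof. by rewrite !netfE mulmxDl -scalemxAl !mxE. Qed.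

Lemma netfB u v w : netf (u - v) w = netf u w - netf v w.
Proof. by rewrite !netfE mulmxBl !mxE. Qed.

Lemma netf_sum (I : Type) (r : seq I) (P : pred I) (F : I -> 'rV[R]_m) w :
  netf (\sum_(i <- r | P i) F i) w = \sum_(i <- r | P i) netf (F i) w.
Proof.
rewrite netfE mulmx_suml summxE; apply: eq_bigr => i _; by rewrite netfE.
Qed.

Lemma tgt_neq0 e : (tgt e == ord0) = false.
Proof. by apply/negbTE; rewrite -val_eqE /= -lt0n; apply: leq_ltn_trans (Hord e). Qed.

Lemma src_lt e : (src e < n.+1)%N.
Proof. by have := Hord e; have := ltn_ord (tgt e); lia. Qed.

Lemma internal_src e : src e != ord0 -> internal (src e).
Proof. by rewrite /internal -val_eqE /= -lt0n src_lt andbT. Qed.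

Lemma internal_src_tgt e w : tgt e = w -> internal w -> src e != ord0 -> internal (src e).
Proof. by move=> _ _; apply: internal_src. Qed.

Lemma out_edge w : internal w -> exists e, forall e', (src e' == w) = (e' == e).
Proof.
move=> hw; have /cards1P [e he] : #|[set e | src e == w]| == 1%N.
  apply/eqP; rewrite -(Hout hw) /outdeg; apply: eq_card => e. rewrite !inE /in_set unfold_in /= asboolb //.
exists e => e'; move/setP: he => /(_ e'); by rewrite !inE.
Qed.

Lemma uniq0 (v : 'rV[R]_m) : (forall e, src e == ord0 -> v 0 e = 0) ->
  (forall w, internal w -> netf v w = 0) -> v = 0.
Proof.
move=> h0 hnet.
suff H : forall k e, (src e < k)%N -> v 0 e = 0.
  by apply/rowP => e; rewrite mxE; apply: (H (src e).+1).
elim=> [//|k IH] e; rewrite ltnS leq_eqVlt => /orP [/eqP hk|]; last exact: IH.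
case: (boolP (src e == ord0)) => [/h0 //|hs].
have hi := internal_src hs.
have [e1 he1] := out_edge hi.
have := hnet _ hi; rewrite /netf (big_pred1 e1); last by move=> x; rewrite /= he1.
have : e = e1 by apply/eqP; rewrite -he1.
move=> <-; rewrite big1 ?subr0 // => e' /eqP te.
by apply: IH; rewrite -hk -te; apply: Hord.
Qed.

Fixpoint Fv (c : 'rV[R]_m) (b : 'I_(n.+2) -> R) (k : nat) (w : 'I_(n.+2)) : R :=
  if k is k'.+1 then
    \sum_(e | tgt e == w) (if src e == ord0 then c 0 e else Fv c b k' (src e)) + b w
  else 0.

Definition sol (c : 'rV[R]_m) (b : 'I_(n.+2) -> R) : 'rV[R]_m :=
  \row_e (if src e == ord0 then c 0 e else Fv c b n.+2 (src e)).

Lemma Fv_stab (c : 'rV[R]_m) (b : 'I_(n.+2) -> R) k (w : 'I_(n.+2)) : (w < k)%N -> Fv c b k w = Fv c b k.+1 w.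
Proof.
elim: k w => // k IH w hw /=; congr (_ + _); apply: eq_bigr => e /eqP te.
case: ifP => // _; apply: IH; have := Hord e; rewrite te; lia.
Qed.

Lemma sol_src0 (c : 'rV[R]_m) (b : 'I_(n.+2) -> R) e : src e == ord0 -> sol c b 0 e = c 0 e.
Proof. by rewrite mxE => ->. Qed.

Lemma sol_net (c : 'rV[R]_m) (b : 'I_(n.+2) -> R) (w : 'I_(n.+2)) : internal w -> netf (sol c b) w = b w.
Proof.
move=> hw; have [e1 he1] := out_edge hw.
have se1 : src e1 = w by apply/eqP; rewrite he1.
rewrite /netf (big_pred1 e1); last by move=> x; rewrite /= he1.
have w0 : (w == ord0) = false.
  by apply/negbTE; move: hw; rewrite /internal -val_eqE /= -lt0n => /andP [].
rewrite mxE se1 w0 /=.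
set X := \sum_(e | tgt e == w) _.
suff -> : \sum_(e | tgt e == w) sol c b 0 e = X by rewrite addrC addKr.
apply: eq_bigr => e /eqP te; rewrite mxE; case: ifP => // _.
rewrite -(@Fv_stab c b n.+1 (src e)) //; have := Hord e; move: hw; rewrite /internal te; lia.
Qed.

Lemma sol_closed (P : R -> Prop) (c : 'rV[R]_m) (b : 'I_(n.+2) -> R) : P 0 -> (forall x y, P x -> P y -> P (x + y)) ->
  (forall e, src e == ord0 -> P (c 0 e)) -> (forall w, internal w -> P (b w)) ->
  forall e, P (sol c b 0 e).
Proof.
move=> P0 PD Pc Pb.
have H : forall k w, internal w -> P (Fv c b k w).
  elim=> [//|k IH] w hw /=; apply: (PD); last exact: Pb.
  apply: (@big_ind R P 0 +%R P0 PD) => e _; case: ifP => [/Pc //|/negbT hs].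
  by apply: (IH); apply: internal_src.
move=> e; rewrite mxE; case: ifP => [/Pc //|/negbT hs].
by apply: H; apply: internal_src.
Qed.

Lemma netf_total v : \sum_w netf v w = 0.
Proof.
under eq_bigr do rewrite netfE mxE.
rewrite exchange_big big1 // => e _; rewrite -mulr_sumr.
suff -> : \sum_w Nmat e w = 0 by rewrite mulr0.
under eq_bigr do rewrite mxE.
have h1 : forall x : 'I_(n.+2), \sum_w ((x == w)%:R : R) = 1.
  move=> x; rewrite (bigD1 x) //= eqxx big1 ?addr0 // => w /negbTE.
  by rewrite eq_sym => ->.
by rewrite sumrB !h1 subrr.
Qed.

Lemma netf0 v : netf v ord0 = \sum_(e | src e == ord0) v 0 e.
Proof. by rewrite /netf [X in _ - X]big_pred0 ?subr0 // => e; rewrite tgt_neq0. Qed.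

Lemma internalE (w : 'I_(n.+2)) : ((w != ord0) && (w != ord_max)) = internal w.
Proof.
rewrite /internal -!val_eqE /=; have := ltn_ord w.
by case: w => [w hw] /= _; apply/idP/idP; lia.
Qed.

Lemma netfmax v : netf v ord_max = - (netf v ord0 + \sum_(w | internal w) netf v w).
Proof.
have := netf_total v; rewrite (bigD1 ord0) //= (bigD1 ord_max) //=.
rewrite (eq_bigl internal); last by move=> w; rewrite internalE.
move=> h; lra.
Qed.

Definition dd (i : 'I_(n.+2)) : R := (indeg tgt i)%:R - 1.

Lemma internal_neq (w : 'I_(n.+2)) : internal w -> (w != ord0) /\ (w != ord_max).
Proof. by rewrite -internalE => /andP. Qed.

Lemma KG_one : K_G src tgt
    (fun v : 'I_(n.+2) =>
       (if v == ord0 then 0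
        else if v == ord_max then - \sum_(i : 'I_(n.+2) | (0 < i < n.+1)%N) dd i
        else dd v) : R) = 1%N.
Proof.
set a := fun v : 'I_(n.+2) => _.
set fs := sol 0 a.
have hint w : internal w -> 0 <= dd w.
  move=> hw; rewrite /dd subr_ge0 ler1n lt0n; apply/negP => /eqP /Hsource hw0.
  by have [] := internal_neq hw; rewrite hw0 eqxx.
have Ha w : internal w -> a w = dd w.
  by move=> hw; have [h1 h2] := internal_neq hw; rewrite /a (negbTE h1) (negbTE h2).
have fs0 e : src e == ord0 -> fs 0 e = 0 by move=> h; rewrite sol_src0 // mxE.
have Hnet : forall v, netf fs v = a v.
  have n0 : netf fs ord0 = 0 by rewrite netf0 big1.
  have nint w : internal w -> netf fs w = a w by move=> hw; rewrite sol_net.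
  move=> v; have [->|h0] := eqVneq v ord0; first by rewrite n0 /a eqxx.
  have [->|hm] := eqVneq v ord_max; last first.
    by apply: nint; rewrite -internalE h0 hm.
  rewrite netfmax n0 add0r /a eqxx /= (eq_bigr dd); last first.
    by move=> w hw; rewrite nint // Ha.
  by [].
have Hin : flow_polytope src tgt a fs /\ intvec fs.
  split; [split|].
  - apply: (sol_closed (P := fun x => 0 <= x)) => //.
    + by move=> x y; apply: addr_ge0.
    + by move=> e _; rewrite mxE.
    + by move=> w hw; rewrite Ha // hint.
  - exact: Hnet.
  - apply: (sol_closed (P := fun x => x \is a Num.int)) => //.
    + by move=> x y; apply: rpredD.
    + by move=> e _; rewrite mxE.
    + by move=> w hw; rewrite Ha // /dd; apply: rpredB; [exact: natr_int|exact: rpred1].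
have Huniq g : flow_polytope src tgt a g -> g = fs.
  move=> [g0 gnet]; apply/eqP; rewrite -subr_eq0; apply/eqP; apply: uniq0.
  - move=> e he; have -> : (g - fs) 0 e = g 0 e - fs 0 e by rewrite !mxE.
    rewrite fs0 // subr0.
    have := gnet ord0; rewrite /a eqxx -/(netf g ord0) netf0 => hs.
    by apply: (psumr_eq0P _ hs) => // i _.
  - by move=> w hw; rewrite netfB sol_net // (gnet w : netf g w = a w) subrr.
rewrite /K_G.
have -> : [set f | flow_polytope src tgt a f /\ intvec f]%classic = [set fs]%classic.
  apply/seteqP; split => f /=; first by move=> [/Huniq].
  by move=> ->.
by rewrite fset_set1 cardfs1.
Qed.

Definition a1 (v : 'I_(n.+2)) : R := if v == ord0 then 1 else if v == ord_max then -1 else 0.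
Definition S := flow_polytope src tgt a1.
Definition delta (e : 'I_m) : 'rV[R]_m := \row_e' ((e' == e)%:R).
Definition V (e : 'I_m) : 'rV[R]_m := sol (delta e) (fun _ => 0).
Definition phi (c : 'rV[R]_m) : 'rV[R]_m := \sum_(e | src e == ord0) c 0 e *: V e.

Lemma max_neq0 : (ord_max : 'I_(n.+2)) != ord0.
Proof. by rewrite -val_eqE. Qed.

Lemma a1_int w : internal w -> a1 w = 0.
Proof. by move=> /internal_neq [h1 h2]; rewrite /a1 (negbTE h1) (negbTE h2). Qed.

Lemma V_src0 e e' : src e' == ord0 -> V e 0 e' = (e' == e)%:R.
Proof. by move=> h; rewrite sol_src0 // mxE. Qed.

Lemma V_ge0 e e' : 0 <= V e 0 e'.
Proof.
apply: (sol_closed (P := fun x => 0 <= x)) => //.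
- by move=> x y; apply: addr_ge0.
- by move=> e1 _; rewrite mxE ler0n.
Qed.

Lemma V_int e e' : V e 0 e' \is a Num.int.
Proof.
apply: (sol_closed (P := fun x => x \is a Num.int)) => //.
- by move=> x y; apply: rpredD.
- by move=> e1 _; rewrite mxE natr_int.
Qed.

Lemma netfZ a u w : netf (a *: u) w = a * netf u w.
Proof. by rewrite !netfE -scalemxAl mxE. Qed.

Lemma netf_V e w : src e == ord0 -> netf (V e) w = a1 w.
Proof.
move=> he.
have n0 : netf (V e) ord0 = 1.
  rewrite netf0 (eq_bigr (fun e' => (e' == e)%:R)) => [|e' h]; last by rewrite V_src0.
  rewrite (bigD1 e) //= eqxx big1 ?addr0 // => e' /andP [_ /negbTE ->] //.
have ni w' : internal w' -> netf (V e) w' = 0 by move=> hw; rewrite sol_net.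
have [->|h0] := eqVneq w ord0; first by rewrite n0 /a1 eqxx.
have [->|hm] := eqVneq w ord_max.
  rewrite netfmax n0 big1 ?addr0 /a1 ?eqxx ?(negbTE max_neq0) //. 
by rewrite ni ?a1_int // -internalE h0 hm.
Qed.

Lemma V_S e : src e == ord0 -> S (V e).
Proof. by move=> he; split; [move=> e'; apply: V_ge0|move=> w; apply: netf_V]. Qed.

Lemma netf_phi (c : 'rV[R]_m) w : netf (phi c) w = (\sum_(e | src e == ord0) c 0 e) * a1 w.
Proof.
rewrite /phi netf_sum mulr_suml; apply: eq_bigr => e he.
by rewrite netfZ netf_V.
Qed.

Lemma phi_src0 (c : 'rV[R]_m) e : src e == ord0 -> phi c 0 e = c 0 e.
Proof.
move=> he; rewrite /phi summxE (eq_bigr (fun e' => c 0 e' * (e == e')%:R)); last first.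
  by move=> e' he'; rewrite mxE V_src0.
rewrite (bigD1 e) //= eqxx mulr1 big1 ?addr0 // => e' /andP [_ hne].
by rewrite eq_sym (negbTE hne) mulr0.
Qed.

Lemma phi_ext (c c' : 'rV[R]_m) : (forall e, src e == ord0 -> c 0 e = c' 0 e) -> phi c = phi c'.
Proof. by move=> h; apply: eq_bigr => e he; rewrite h. Qed.

Lemma phi_id (v : 'rV[R]_m) : (forall w, internal w -> netf v w = 0) -> phi v = v.
Proof.
move=> hv; apply/eqP; rewrite -subr_eq0; apply/eqP; apply: uniq0.
  move=> e he; have -> : (phi v - v) 0 e = phi v 0 e - v 0 e by rewrite !mxE.
  by rewrite phi_src0 // subrr.
by move=> w hw; rewrite netfB netf_phi a1_int // mulr0 hv // subrr.
Qed.

Lemma phi_ge0 (c : 'rV[R]_m) : (forall e, src e == ord0 -> 0 <= c 0 e) -> forall e, 0 <= phi c 0 e.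
Proof.
move=> h e; rewrite /phi summxE; apply: sumr_ge0 => e' he'.
by rewrite mxE mulr_ge0 // ?h // V_ge0.
Qed.

Lemma phi_int (c : 'rV[R]_m) : (forall e, src e == ord0 -> c 0 e \is a Num.int) ->
  forall e, phi c 0 e \is a Num.int.
Proof.
move=> h e; rewrite /phi summxE; apply: rpred_sum => e' he'.
by rewrite mxE rpredM // ?h // V_int.
Qed.

Lemma outdegE w : outdeg src w = #|[pred e | src e == w]|.
Proof. by apply: eq_card => e; rewrite !inE /in_set unfold_in /= asboolb. Qed.

Lemma card_E0 : (0 < #|[pred e : 'I_m | src e == ord0]|)%N.
Proof.
rewrite -outdegE lt0n; apply/eqP => /Hsink h.
by move: max_neq0; rewrite -h eqxx.
Qed.

Lemma exists_e0 : exists e0, src e0 == ord0.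
Proof. by have /card_gt0P [e he] := card_E0; exists e. Qed.

Lemma aff_sub x : affine_hull S x -> forall w, netf x w = a1 w.
Proof.
move=> [k [p [c [hp [hc ->]]]]] w.
rewrite netf_sum (eq_bigr (fun i => c i * a1 w)); last first.
  by move=> i _; rewrite netfZ; case: (hp i) => _ /(_ w) h; rewrite (h : netf (p i) w = a1 w).
by rewrite -mulr_suml hc mul1r.
Qed.

Lemma dir_sub v : dirspace S v -> forall w, netf v w = 0.
Proof.
by move=> [x [y [hx [hy ->]]]] w; rewrite netfB (aff_sub hx) (aff_sub hy) subrr.
Qed.

Lemma S_aff x : S x -> affine_hull S x.
Proof.
move=> hx; exists 1%N, (fun _ => x), (fun _ => 1); split => //; split.
  by rewrite big_ord1.
by rewrite big_ord1 scale1r.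
Qed.

Lemma dir_sup (v : 'rV[R]_m) : (forall w, netf v w = 0) -> dirspace S v.
Proof.
move=> hv; have [e0 he0] := exists_e0.
exists (phi v + V e0), (V e0); split; last split.
- exists m, (fun e => if src e == ord0 then V e else V e0),
    (fun e => if src e == ord0 then v 0 e + (e == e0)%:R else 0).
  split; first by move=> e; case: ifP => h; apply: V_S.
  split.
    rewrite -big_mkcond big_split /= -netf0 hv add0r.
    by rewrite (bigD1 e0) //= eqxx big1 ?addr0 // => e /andP [_ /negbTE ->].
  rewrite (eq_bigr (fun e => if src e == ord0 then (v 0 e + (e == e0)%:R) *: V e else 0));
    last by move=> e _; case: ifP => // _; rewrite scale0r.
  rewrite -big_mkcond /=; under eq_bigr do rewrite scalerDl.
  rewrite big_split /=; congr (_ + _).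
  by rewrite (bigD1 e0) //= eqxx scale1r big1 ?addr0 // => e /andP [_ /negbTE ->]; rewrite scale0r.
- by apply: S_aff; apply: V_S.
- by rewrite addrK phi_id // => w _; apply: hv.
Qed.

Definition E0s := enum [pred e : 'I_m | src e == ord0].
Definition dK := (#|[pred e : 'I_m | src e == ord0]|).-1.

Lemma sizeE0 : size E0s = dK.+1.
Proof. by rewrite /E0s -cardE /dK prednK // card_E0. Qed.

Lemma sum_delta (F : 'I_m -> R) x : \sum_e (F e * (e == x)%:R) = F x.
Proof.
rewrite (bigD1 x) //= eqxx mulr1 big1 ?addr0 // => e /negbTE ->.
by rewrite mulr0.
Qed.

Lemma phiE (v : 'rV[R]_m) e' : phi v 0 e' = \sum_(e | src e == ord0) v 0 e * V e 0 e'.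
Proof. by rewrite /phi summxE; apply: eq_bigr => e _; rewrite mxE. Qed.

Section E.
Variable e0 : 'I_m.
Hypothesis he0 : src e0 == ord0.

Definition ee (j : nat) := nth e0 E0s j.

Lemma ee_src j : (j < dK.+1)%N -> src (ee j) == ord0.
Proof.
move=> hj; have : ee j \in E0s by rewrite mem_nth // sizeE0.
by rewrite mem_enum.
Qed.

Lemma ee_inj i j : (i < dK.+1)%N -> (j < dK.+1)%N -> (ee i == ee j) = (i == j).
Proof. by move=> hi hj; rewrite nth_uniq ?sizeE0 // enum_uniq. Qed.

Lemma index_ee e : src e == ord0 -> (index e E0s < dK.+1)%N /\ ee (index e E0s) = e.
Proof.
move=> he; have he' : e \in E0s by rewrite mem_enum.
by split; [rewrite -sizeE0 index_mem | exact: nth_index].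
Qed.

Lemma ee_index j : (j < dK.+1)%N -> index (ee j) E0s = j.
Proof. by move=> hj; rewrite index_uniq ?sizeE0 // enum_uniq. Qed.

Lemma sumE0 (F : 'I_m -> R) : \sum_(e | src e == ord0) F e = \sum_(j < dK.+1) F (ee j).
Proof.
transitivity (\sum_(e <- E0s) F e).
  by rewrite /E0s big_enum /=; apply: eq_bigl => e; rewrite inE.
by rewrite (big_nth e0) sizeE0 big_mkord.
Qed.

Lemma affdim_S : affdim S = dK.
Proof.
rewrite /affdim; apply/eqP; rewrite eqn_leq; apply/andP; split.
  apply/bigmax_leqP => k /asboolP [A [hfree hrows]].
  pose Sel0 : 'M[R]_(m, dK.+1) := \matrix_(e, j) ((e == ee j)%:R).
  pose Emb : 'M[R]_(dK.+1, m) := \matrix_(j, e) V (ee j) 0 e.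
  pose B := A *m Sel0.
  have Bij i j : B i j = A i (ee j).
    rewrite /B mxE -[RHS](sum_delta (fun e => A i e)); apply: eq_bigr => e _.
    by rewrite mxE.
  have hA : A = B *m Emb.
    apply/matrixP => i e'; rewrite mxE.
    under eq_bigr do rewrite Bij mxE.
    rewrite -(sumE0 (fun e => A i e * V e 0 e')).
    have hr : row i A = phi (row i A).
      by rewrite phi_id // => w _; apply: dir_sub.
    have := congr1 (fun v : 'rV[R]_m => v 0 e') hr; rewrite /= phiE mxE => ->.
    by apply: eq_bigr => e _; rewrite mxE.
  have hB1 : B *m const_mx 1 = 0 :> 'cV_k.
    apply/matrixP => i j; rewrite !mxE.
    under eq_bigr do rewrite Bij mxE mulr1.
    rewrite -(sumE0 (fun e => A i e)).
    apply: (etrans _ (dir_sub (hrows i) ord0)); rewrite netf0.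
    by apply: eq_bigr => e _; rewrite mxE.
  have hu : (const_mx 1 : 'rV[R]_(dK.+1)) *m B^T = 0.
    apply/matrixP => z i; have := congr1 (fun M : 'cV[R]_k => M i 0) hB1; rewrite !mxE => h.
    apply: (etrans _ h); apply: eq_bigr => j _; by rewrite !mxE mul1r mulr1.
  have r1 : (\rank A <= \rank B)%N by rewrite {1}hA mxrankM_maxl.
  have r2 : (1 <= dK.+1 - \rank B)%N.
    rewrite -mxrank_tr -mxrank_ker.
    have <- : \rank (const_mx 1 : 'rV[R]_(dK.+1)) = 1%N.
      rewrite rank_rV; apply/eqP; rewrite eqb1; apply/eqP => /matrixP /(_ 0 0).
      by rewrite !mxE => /eqP; rewrite oner_eq0.
    by apply: mxrankS; apply/sub_kermxP.
  move: hfree; rewrite /row_free => /eqP hk.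
  have := rank_leq_row B; move: r1 r2; rewrite hk; lia.
have hdm : (dK < m.+1)%N.
  have : (#|[pred e : 'I_m | src e == ord0]| <= m)%N.
    by apply: leq_trans (max_card _) _; rewrite card_ord.
  have := card_E0; rewrite /dK; lia.
apply: (@leq_bigmax_cond _ _ (fun k : 'I_(m.+1) => (k : nat)) (Ordinal hdm)).
apply/asboolP.
pose Amat : 'M[R]_(dK, m) := \matrix_(i, e) (V (ee i.+1) 0 e - V (ee 0) 0 e).
exists Amat; split.
  pose Sel : 'M[R]_(m, dK) := \matrix_(e, j) ((e == ee j.+1)%:R).
  have h1 : Amat *m Sel = 1%:M.
    apply/matrixP => i j; rewrite [LHS]mxE [RHS]mxE.
    under eq_bigr do rewrite [Amat _ _]mxE [Sel _ _]mxE.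
    have := sum_delta (fun e => V (ee i.+1) 0 e - V (ee 0) 0 e) (ee j.+1).
    rewrite /= => ->.
    have hj : (j.+1 < dK.+1)%N by rewrite ltnS.
    have hi : (i.+1 < dK.+1)%N by rewrite ltnS.
    rewrite !V_src0 ?ee_src // !ee_inj // eqSS.
    by rewrite subr0 eq_sym.
  rewrite /row_free; apply/eqP/anti_leq; rewrite rank_leq_row /=.
  by rewrite -{1}(mxrank1 R dK) -h1 mxrankM_maxl.
move=> i; have -> : row i Amat = V (ee i.+1) - V (ee 0).
  by apply/rowP => e; rewrite !mxE.
apply: dir_sup => w; rewrite netfB !netf_V ?subrr // ee_src //.
by rewrite ltnS.
Qed.

Lemma grid_S N : (0 < N)%N -> grid_count S N = 'C(dK + N, dK).
Proof.
move=> N0.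
have [hp0a hp0i] : affine_hull S (lattice_origin S) /\ intvec (lattice_origin S).
  apply: (@xgetPex _ 0 [set p | affine_hull S p /\ intvec p]%classic); exists (V e0); split; first by apply: S_aff; apply: V_S.
  by move=> e; apply: V_int.
set p0 := lattice_origin S in hp0a hp0i *.
have np0 := aff_sub hp0a.
have Nn0 : (N%:R : R) != 0 by rewrite pnatr_eq0 -lt0n.
pose y (t : dK.+1.-tuple 'I_(N.+1)) : 'rV[R]_m :=
  \row_e ((nth ord0 t (index e E0s) : nat)%:R).
pose g t := phi (y t) - N%:R *: p0.
have ysum t : \sum_(e | src e == ord0) y t 0 e = (\sum_(i <- t) (i : nat))%:R.
  rewrite sumE0 natr_sum (big_nth ord0) size_tuple big_mkord.
  by apply: eq_bigr => j _; rewrite mxE ee_index.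
have ginj : injective g.
  move=> t t' h.
  have hp : phi (y t) = phi (y t').
    by move/(congr1 (fun x => x + N%:R *: p0)): h; rewrite /g !subrK.
  apply: eq_from_tnth => j; apply/val_inj.
  have := congr1 (fun v : 'rV[R]_m => v 0 (ee j)) hp.
  rewrite /= !phi_src0 ?ee_src // !mxE ee_index // => /eqP.
  by rewrite eqr_nat !(tnth_nth ord0) => /eqP.
have hset : [set v | intvec v /\ dirspace S v /\ S (p0 + N%:R^-1 *: v)]%classic =
   [set` [fset g t | t in [set t : dK.+1.-tuple 'I_(N.+1) | \sum_(i <- t) (i : nat) == N]%SET]%fset]%classic.
  apply/seteqP; split => u /=.
    move=> [hui [hud hS]].
    set x := p0 + N%:R^-1 *: u.
    have [hx0 hxn] : (forall e, 0 <= x 0 e) /\ (forall w, netf x w = a1 w) by [].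
    set z := N%:R *: x.
    have zE : z = N%:R *: p0 + u.
      by rewrite /z /x scalerDr scalerA mulfV // scale1r.
    have hzi e : z 0 e \is a Num.int.
      by rewrite zE !mxE rpredD // rpredM // natr_int.
    have hz0 e : 0 <= z 0 e by rewrite /z mxE mulr_ge0 // ler0n.
    have hzn w : netf z w = N%:R * a1 w by rewrite netfZ hxn.
    have hzp : phi z = z by apply: phi_id => w hw; rewrite hzn a1_int // mulr0.
    have hzs : \sum_(e | src e == ord0) z 0 e = N%:R.
      by rewrite -netf0 hzn /a1 eqxx mulr1.
    have hzle e : src e == ord0 -> z 0 e <= N%:R.
      move=> he; rewrite -hzs (bigD1 e) //= lerDl sumr_ge0 // => e' _.
    have hzt e : src e == ord0 -> (Num.truncn (z 0%R e) < N.+1)%N.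
      have hN : Num.truncn (N%:R : R) = N := natrK N.
      move=> he; rewrite ltnS -[X in (_ <= X)%N]hN; apply: le_truncn; exact: hzle.
    have hzN e : (Num.truncn (z 0 e))%:R = z 0 e.
      by apply: truncnK; rewrite natrEint hzi hz0.
    pose tz : dK.+1.-tuple 'I_(N.+1) := [tuple (inord (Num.truncn (z 0 (ee j))) : 'I_(N.+1)) | j < dK.+1].
    have hy e : src e == ord0 -> y tz 0 e = z 0 e.
      move=> he; have [hi hee] := index_ee he.
      rewrite mxE -(tnth_nth ord0 tz (Ordinal hi)) tnth_mktuple /= hee inordK ?hzt //.
    apply/imfsetP; exists tz.
      rewrite inE -(eqr_nat R) -ysum -hzs; apply/eqP; apply: eq_bigr => e he.
      exact: hy.
    rewrite /g (phi_ext (c' := z)); last exact: hy.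
    by rewrite hzp zE addrC addKr.
  move=> /imfsetP [t ht ->]; move: ht; rewrite inE => /eqP ht.
  have hys : \sum_(e | src e == ord0) y t 0 e = N%:R by rewrite ysum ht.
  split; last split.
  - move=> e; rewrite /g /= !mxE; apply: rpredB; first by apply: phi_int => e' _; rewrite mxE natr_int.
    by rewrite rpredM // natr_int.
  - apply: dir_sup => w; rewrite /g netfB netfZ netf_phi np0 hys subrr //.
  - have -> : p0 + N%:R^-1 *: g t = N%:R^-1 *: phi (y t).
      by rewrite /g scalerBr scalerA mulVf // scale1r addrC subrK.
    split.
      move=> e; rewrite mxE mulr_ge0 ?invr_ge0 ?ler0n //.
      by apply: phi_ge0 => e' _; rewrite mxE ler0n.
    by move=> w; rewrite -/(netf _ w) netfZ netf_phi hys mulrA mulVf // mul1r.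
rewrite /grid_count -/p0 hset set_fsetK card_imfset //=.
rewrite -card_ord_partitions cardE; apply: perm_size; apply: uniq_perm.
- exact: enum_uniq.
- exact: enum_uniq.
- by move=> t; rewrite !mem_enum !inE.
Qed.

End E.
Lemma normvol_S : normvol S = 1.
Proof.
have [e0 he0] := exists_e0.
rewrite /normvol /relvol (affdim_S he0).
have hc : ((fun N : nat => ((grid_count S N)%:R / (N%:R) ^+ dK : R)) @ \oo --> (((dK`!)%:R)^-1 : R))%classic.
  rewrite -cvg_shiftS.
  have E : [sequence ((grid_count S N.+1)%:R / (N.+1%:R) ^+ dK : R)]_N =
           [sequence (('C(dK + N.+1, dK))%:R / (N.+1%:R) ^+ dK : R)]_N.
    by apply/funext => N /=; rewrite (grid_S he0).
  rewrite E (cvg_shiftS (fun N : nat => (('C(dK + N, dK))%:R / (N%:R) ^+ dK : R))).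
  exact: lim_binom.
rewrite (cvg_lim (@Rhausdorff R) hc) mulfV //.
by rewrite pnatr_eq0 -lt0n fact_gt0.
Qed.
End G.

Unset Implicit Arguments.
Theorem lemma3p2 (R : realType) (n m : nat) (src tgt : 'I_m -> 'I_(n.+2))
  (Hord : forall e : 'I_m, (src e < tgt e)%N)
  (Hsource : forall v : 'I_(n.+2), indeg tgt v = 0%N <-> v = ord0)
  (Hsink : forall v : 'I_(n.+2), outdeg src v = 0%N <-> v = ord_max)
  (Hout : forall i : 'I_(n.+2), (0 < i < n.+1)%N -> outdeg src i = 1%N) :
  let d : 'I_(n.+2) -> R := fun i => (indeg tgt i)%:R - 1 in
  normvol (flow_polytope src tgt
             (fun v : 'I_(n.+2) =>
               (if v == ord0 then 1 else if v == ord_max then -1 else 0) : R))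
    = 1 /\
  K_G src tgt
    (fun v : 'I_(n.+2) =>
       (if v == ord0 then 0
        else if v == ord_max then - \sum_(i : 'I_(n.+2) | (0 < i < n.+1)%N) d i
        else d v) : R) = 1%N.
Proof.
move=> d; split.
  exact: (normvol_S R Hord Hsink Hout).
exact: (KG_one R Hord Hsource Hout).
Qed.
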